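(* Let $N\ge 4$ and $M\ge 1$ be integers, let $\mathcal I_N=\{(i,j): i,j\in\{1,\dots,N\},\ i\neq j\}$, and for each dyad $(i,j)\in\mathcal I_N$ let $Y_{ij}\in\{0,1,\dots,M\}$ be an ordered outcome and $X_{ij}\in\mathbb R^k$ a covariate vector. Suppose that, conditional on all covariates $\mathbf X=(X_{ij})_{(i,j)\in\mathcal I_N}$ and all fixed effects $\mathbf F$ (consisting of real numbers $\lambda_{im},\delta_{im}$ for $i=1,\dots,N$, $m=1,\dots,M$), the outcomes $Y_{ij}$ are independent across dyads with \[ P(Y_{ij}=m\mid X_{ij},F_i,F_j)=\begin{cases}1-\Lambda(X_{ij}'\beta_0-\lambda_{i1}-\delta_{j1}), & m=0,\\ \Lambda(X_{ij}'\beta_0-\lambda_{im}-\delta_{jm})-\Lambda(X_{ij}'\beta_0-\lambda_{i,m+1}-\delta_{j,m+1}), & 1\le m\le M-1,\\ \Lambda(X_{ij}'\beta_0-\lambda_{iM}-\delta_{jM}), & m=M,\end{cases} \] where $\Lambda(z)=e^z/(1+e^z)$ and $\beta_0\in\mathbb R^k$. For $m\in\{1,\dots,M\}$ let $D_{ij}(m)=\mathbf 1\{Y_{ij}\ge m\}$. For a tetrad $\sigma=(i_1,i_2,j_1,j_2)$ of four distinct nodes, define \[ \overline Z_\sigma(m)=\tfrac12\Big((D_{i_1j_1}(m)-D_{i_1j_2}(m))-(D_{i_2j_1}(m)-D_{i_2j_2}(m))\Big), \] $X_\sigma=(X_{i_1j_1},X_{i_1j_2},X_{i_2j_1},X_{i_2j_2})$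 and $r_\sigma=(X_{i_1j_1}-X_{i_1j_2})-(X_{i_2j_1}-X_{i_2j_2})$. Then for any tetrad $\sigma$ and any cutoff $m\in\{1,\dots,M\}$, \[ P\big(\overline Z_\sigma(m)=1\mid \overline Z_\sigma(m)\in\{-1,+1\},X_\sigma\big)=\Lambda(r_\sigma'\beta_0). \]
   Context: The thresholds are assumed ordered in the sense that $\lambda_{im'}+\delta_{jm'}\ge \lambda_{im}+\delta_{jm}$ whenever $m'\ge m$, so that the displayed probabilities are valid. $F_i=((\lambda_{im},\delta_{im}):m=1,\dots,M)$ collects the fixed effects of node $i$ (sender effects $\lambda_{im}$ and receiver effects $\delta_{im}$). *)

(* Defs.v *)
From HB Require Import structures.
From mathcomp Require Import all_boot all_order all_algebra.
From mathcomp Require Import reals sequences exp.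
Set Implicit Arguments. Unset Strict Implicit. Unset Printing Implicit Defensive.
Import Order.TTheory GRing.Theory Num.Theory.
Local Open Scope ring_scope.

Section Defs.
Variable R : realType.

Definition Lambda (z : R) : R := expR z / (1 + expR z).

Definition dotv (k : nat) (x b : 'rV[R]_k) : R := \sum_(l < k) x 0 l * b 0 l.

Variables (N M k : nat).

(* ordered-logit probability P(Y_ij = m | X_ij, F_i, F_j);
   lam i m, del j m are used for m in {1,...,M} *)
Definition pY (X : 'I_N -> 'I_N -> 'rV[R]_k) (beta : 'rV[R]_k)
  (lam del : 'I_N -> nat -> R) (i j : 'I_N) (m : nat) : R :=
  let G l := Lambda (dotv (X i j) beta - lam i l - del j l) in
  if m == 0%N then 1 - G 1%N
  else if (m < M)%N then G m - G m.+1
  else G M.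

Definition prob (Omega : finType) (P : Omega -> R) (A : pred Omega) : R :=
  \sum_(w | A w) P w.

Definition cprob (Omega : finType) (P : Omega -> R) (A B : pred Omega) : R :=
  prob P (predI A B) / prob P B.

Definition Dind (y : 'I_(M.+1)) (m : nat) : R := ((m <= y)%N)%:R.

Definition Zbar (Y : 'I_N -> 'I_N -> 'I_(M.+1)) (i1 i2 j1 j2 : 'I_N) (m : nat) : R :=
  2^-1 * ((Dind (Y i1 j1) m - Dind (Y i1 j2) m)
          - (Dind (Y i2 j1) m - Dind (Y i2 j2) m)).

End Defs.

(* Main.v *)
Require Import Defs.
From HB Require Import structures.
From mathcomp Require Import all_boot all_order all_algebra.
From mathcomp Require Import reals sequences exp.
From mathcomp Require Import ring lra.
Import Order.TTheory GRing.Theory Num.Theory.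
Local Open Scope ring_scope.

Section Aux.
Variables (R : realType) (N M k : nat) (X : 'I_N -> 'I_N -> 'rV[R]_k) (beta0 : 'rV[R]_k)
  (lam del : 'I_N -> nat -> R).

Definition GG (i j : 'I_N) (l : nat) : R := Lambda (dotv (X i j) beta0 - lam i l - del j l).

Lemma sum_ge (i j : 'I_N) (m : nat) : (1 <= m)%N -> (m <= M)%N ->
  \sum_(v < M.+1 | (m <= v)%N) pY M X beta0 lam del i j v = GG i j m.
Proof.
move=> h1 h2.
have -> : \sum_(v < M.+1 | (m <= v)%N) pY M X beta0 lam del i j v =
   \sum_(v < M.+1 | true && (m <= v)%N) pY M X beta0 lam del i j v by [].
rewrite -(big_geq_mkord m M.+1 xpredT (fun v => pY M X beta0 lam del i j v)).
pose H l := if (l <= M)%N then GG i j l else 0.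
rewrite (@telescope_sumr_eq _ m M.+1 (fun l => - H l) _ (leqW h2)).
  by rewrite /H ltnn h2 oppr0 opprK add0r.
move=> v /andP[hv1 hv2]; rewrite /pY /H /GG.
have -> : (v == 0%N) = false by apply/negbTE; rewrite -lt0n; apply: leq_trans hv1.
rewrite ltnS in hv2; rewrite hv2 /=.
case: (ltnP v M) => hlt; first by rewrite opprK addrC.
have -> : v = M by apply/eqP; rewrite eqn_leq hv2 hlt.
by rewrite oppr0 opprK add0r.
Qed.

Lemma sum_all (i j : 'I_N) : (1 <= M)%N ->
  \sum_(v < M.+1) pY M X beta0 lam del i j v = 1.
Proof.
move=> hM; rewrite (bigD1 ord0) //=.
rewrite (eq_bigl (fun v : 'I_M.+1 => (1 <= v)%N)); last first.
  by move=> v; rewrite -lt0n.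
rewrite sum_ge // /pY eqxx /GG. by rewrite subrK.
Qed.

Lemma sum_lt (i j : 'I_N) (m : nat) : (1 <= m)%N -> (m <= M)%N ->
  \sum_(v < M.+1 | ~~ (m <= v)%N) pY M X beta0 lam del i j v = 1 - GG i j m.
Proof.
move=> h1 h2; have := sum_all i j (leq_trans h1 h2).
rewrite (bigID (fun v : 'I_M.+1 => (m <= v)%N)) /= sum_ge // => <-.
by rewrite addrC addrK.
Qed.
End Aux.
Section Fact.
Variables (R : realType) (N M k : nat) (X : 'I_N -> 'I_N -> 'rV[R]_k) (beta0 : 'rV[R]_k)
  (lam del : 'I_N -> nat -> R) (Omega : finType) (P : Omega -> R)
  (Y : Omega -> 'I_N -> 'I_N -> 'I_(M.+1)).
Hypothesis hY : forall y : 'I_N -> 'I_N -> 'I_(M.+1),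
     prob P (fun w => [forall i, forall j, (i != j) ==> (Y w i j == y i j)])
     = \prod_(i < N) \prod_(j < N | j != i) pY M X beta0 lam del i j (y i j).

Definition cfg (w : Omega) : {ffun 'I_N * 'I_N -> 'I_(M.+1)} :=
  [ffun p => if p.1 != p.2 then Y w p.1 p.2 else ord0].

Lemma pfamE (S : 'I_N * 'I_N -> pred 'I_(M.+1)) (f : {ffun 'I_N * 'I_N -> 'I_(M.+1)}) :
  reflect (forall p, if p.1 != p.2 then S p (f p) else f p == ord0)
    (f \in pfamily ord0 (fun p : 'I_N * 'I_N => p.1 != p.2) S).
Proof.
apply: (iffP familyP) => H p; have := H p.
  rewrite /in_mem /=. case: (p.1 != p.2) => //.
rewrite /in_mem /=; case: (p.1 != p.2) => //.

Qed.

Lemma prod_event (S : 'I_N * 'I_N -> pred 'I_(M.+1)) :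
  prob P (fun w => [forall p : 'I_N * 'I_N, (p.1 != p.2) ==> S p (Y w p.1 p.2)])
  = \prod_(p | p.1 != p.2) \sum_(v | S p v) pY M X beta0 lam del p.1 p.2 v.
Proof.
rewrite (big_distr_big_dep ord0) /= /prob.
rewrite (partition_big cfg (fun f => f \in pfamily ord0 (fun p : 'I_N * 'I_N => p.1 != p.2) S)); last first.
  move=> w /forallP Hw; apply/pfamE => p; rewrite /cfg ffunE.
  by case: ifP => h //; have := Hw p; rewrite h.
apply: eq_bigr => f /pfamE Hf.
have -> : \prod_(p | p.1 != p.2) pY M X beta0 lam del p.1 p.2 (f p) =
   \prod_(i < N) \prod_(j < N | j != i) pY M X beta0 lam del i j (f (i, j)).
  rewrite pair_big_dep; apply: eq_big => [[i j]|[i j] _] //=; by rewrite eq_sym.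
rewrite -hY /prob; apply: eq_bigl => w.
apply/idP/idP.
  case/andP=> _ /eqP <-; apply/forallP => i; apply/forallP => j; apply/implyP => hij.
  by rewrite /cfg ffunE /= hij.
move=> /forallP H; have Hc : cfg w = f.
  apply/ffunP => -[i j]; rewrite /cfg ffunE /=.
  case: ifP => hij.
    by have := H i => /forallP /(_ j) /implyP /(_ hij) /eqP.
  by have := Hf (i, j); rewrite /= hij => /eqP.
rewrite Hc eqxx andbT; apply/forallP => p; apply/implyP => hp.
by have := Hf p; rewrite hp -Hc /cfg ffunE hp.
Qed.
End Fact.

Lemma dotvB (R : realType) k (x y b : 'rV[R]_k) : dotv (x - y) b = dotv x b - dotv y b.
Proof. by rewrite /dotv -sumrB; apply: eq_bigr => l _; rewrite !mxE mulrBl. Qed.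

Lemma Lambda_alg (R : realType) (a b c d : R) :
  Lambda a * (1 - Lambda b) * (1 - Lambda c) * Lambda d /
  (Lambda a * (1 - Lambda b) * (1 - Lambda c) * Lambda d +
   (1 - Lambda a) * Lambda b * Lambda c * (1 - Lambda d)) = Lambda (a - b - (c - d)).
Proof.
have ha := expR_gt0 a; have hb := expR_gt0 b; have hc := expR_gt0 c; have hd := expR_gt0 d.
rewrite /Lambda !(expRD, expRN).
move: ha hb hc hd; generalize (expR a) (expR b) (expR c) (expR d) => ea eb ec ed ha hb hc hd.
field.
have h1 : 0 < eb * ec + ea * ed by rewrite addr_gt0 // mulr_gt0.
by rewrite !lt0r_neq0 //; lra.
Qed.

Lemma Zbar1 (R : realType) N M (y : 'I_N -> 'I_N -> 'I_(M.+1)) i1 i2 j1 j2 m :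
  (Zbar R y i1 i2 j1 j2 m == 1) =
  [&& (m <= y i1 j1)%N, ~~ (m <= y i1 j2)%N, ~~ (m <= y i2 j1)%N & (m <= y i2 j2)%N].
Proof.
rewrite /Zbar /Dind.
case: (m <= y i1 j1)%N; case: (m <= y i1 j2)%N; case: (m <= y i2 j1)%N;
 case: (m <= y i2 j2)%N => /=;
 first [by apply/eqP; lra | by apply/negbTE/eqP; lra].
Qed.

Lemma Zbarm1 (R : realType) N M (y : 'I_N -> 'I_N -> 'I_(M.+1)) i1 i2 j1 j2 m :
  (Zbar R y i1 i2 j1 j2 m == -1) =
  [&& ~~ (m <= y i1 j1)%N, (m <= y i1 j2)%N, (m <= y i2 j1)%N & ~~ (m <= y i2 j2)%N].
Proof.
rewrite /Zbar /Dind.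
case: (m <= y i1 j1)%N; case: (m <= y i1 j2)%N; case: (m <= y i2 j1)%N;
 case: (m <= y i2 j2)%N => /=;
 first [by apply/eqP; lra | by apply/negbTE/eqP; lra].
Qed.

Definition Sq {N M} (i1 i2 j1 j2 : 'I_N) (a b c d : pred 'I_(M.+1)) (p : 'I_N * 'I_N) : pred 'I_(M.+1) :=
  if p == (i1, j1) then a else if p == (i1, j2) then b
  else if p == (i2, j1) then c else if p == (i2, j2) then d else predT.

Lemma Sq_event {N M} (i1 i2 j1 j2 : 'I_N) (a b c d : pred 'I_(M.+1))
  (hdist : [&& i1 != i2, i1 != j1, i1 != j2, i2 != j1, i2 != j2 & j1 != j2])
  (y : 'I_N -> 'I_N -> 'I_(M.+1)) :
  [forall p : 'I_N * 'I_N, (p.1 != p.2) ==> Sq i1 i2 j1 j2 a b c d p (y p.1 p.2)] =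
  [&& a (y i1 j1), b (y i1 j2), c (y i2 j1) & d (y i2 j2)].
Proof.
case/andP: hdist => h12 /andP[h11 /andP[h12' /andP[h21 /andP[h22 hj]]]].
have e1 := negbTE h12; have e2 := negbTE hj.
have e1' : (i2 == i1) = false by rewrite eq_sym.
have e2' : (j2 == j1) = false by rewrite eq_sym.
apply/forallP/and4P.
  move=> H; split.
  - by have := H (i1, j1); rewrite /= h11 /Sq eqxx.
  - by have := H (i1, j2); rewrite /= h12' /Sq !eqE /= !eqxx ?e1 ?e2' /=.
  - by have := H (i2, j1); rewrite /= h21 /Sq !eqE /= !eqxx ?e1' ?e2 /=.
  - by have := H (i2, j2); rewrite /= h22 /Sq !eqE /= !eqxx ?e1' ?e2' /=.
case=> ha hb hc hd [i j]; apply/implyP => _ /=; rewrite /Sq.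
case: eqP => [[-> ->] //|_]; case: eqP => [[-> ->] //|_].
by case: eqP => [[-> ->] //|_]; case: eqP => [[-> ->] //|_].
Qed.

Lemma Sq_prod (R : realType) (N M k : nat) (X : 'I_N -> 'I_N -> 'rV[R]_k) (beta0 : 'rV[R]_k)
  (lam del : 'I_N -> nat -> R) (i1 i2 j1 j2 : 'I_N) (a b c d : pred 'I_(M.+1))
  (hdist : [&& i1 != i2, i1 != j1, i1 != j2, i2 != j1, i2 != j2 & j1 != j2]) (hM : (1 <= M)%N) :
  \prod_(p | p.1 != p.2) \sum_(v | Sq i1 i2 j1 j2 a b c d p v) pY M X beta0 lam del p.1 p.2 v =
  (\sum_(v | a v) pY M X beta0 lam del i1 j1 v) * (\sum_(v | b v) pY M X beta0 lam del i1 j2 v) *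
  (\sum_(v | c v) pY M X beta0 lam del i2 j1 v) * (\sum_(v | d v) pY M X beta0 lam del i2 j2 v).
Proof.
case/andP: hdist => h12 /andP[h11 /andP[h12' /andP[h21 /andP[h22 hj]]]].
have e1 := negbTE h12; have e2 := negbTE hj.
have e1' : (i2 == i1) = false by rewrite eq_sym.
have e2' : (j2 == j1) = false by rewrite eq_sym.
rewrite (bigD1 (i1, j1)) /=; last by [].
rewrite (bigD1 (i1, j2)) /=; last by rewrite h12' !eqE /= ?eqxx ?e2'.
rewrite (bigD1 (i2, j1)) /=; last by rewrite h21 !eqE /= ?eqxx ?e1'.
rewrite (bigD1 (i2, j2)) /=; last by rewrite h22 !eqE /= ?eqxx ?e1' ?e2'.
rewrite [\prod_(i | _) _]big1; last first.
  move=> [i j] /andP[/andP[/andP[/andP[hp n1] n2] n3] n4].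
  rewrite /Sq (negbTE n1) (negbTE n2) (negbTE n3) (negbTE n4) /=.
  by rewrite -(@sum_all R N M k X beta0 lam del i j hM).
rewrite /Sq eqxx !eqE /= !eqxx ?e1 ?e2 ?e1' ?e2' /=.
by rewrite mulr1 !mulrA.
Qed.

Theorem theorem1 (R : realType) (N M k : nat) (hN : (4 <= N)%N) (hM : (1 <= M)%N)
  (X : 'I_N -> 'I_N -> 'rV[R]_k) (beta0 : 'rV[R]_k)
  (lam del : 'I_N -> nat -> R)
  (hord : forall (i j : 'I_N) (m m' : nat), (1 <= m)%N -> (m <= m')%N -> (m' <= M)%N ->
     lam i m + del j m <= lam i m' + del j m')
  (Omega : finType) (P : Omega -> R)
  (hP0 : forall w, 0 <= P w) (hP1 : \sum_w P w = 1)
  (Y : Omega -> 'I_N -> 'I_N -> 'I_(M.+1))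
  (hY : forall y : 'I_N -> 'I_N -> 'I_(M.+1),
     prob P (fun w => [forall i, forall j, (i != j) ==> (Y w i j == y i j)])
     = \prod_(i < N) \prod_(j < N | j != i) pY M X beta0 lam del i j (y i j))
  (i1 i2 j1 j2 : 'I_N)
  (hdist : [&& i1 != i2, i1 != j1, i1 != j2, i2 != j1, i2 != j2 & j1 != j2])
  (m : nat) (hm1 : (1 <= m)%N) (hmM : (m <= M)%N) :
  cprob P (fun w => Zbar R (Y w) i1 i2 j1 j2 m == 1)
          (fun w => (Zbar R (Y w) i1 i2 j1 j2 m == 1) || (Zbar R (Y w) i1 i2 j1 j2 m == -1))
  = Lambda (dotv ((X i1 j1 - X i1 j2) - (X i2 j1 - X i2 j2)) beta0).
Proof.
pose G (i j : 'I_N) := @GG R N k X beta0 lam del i j m.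
have PE := @prod_event R N M k X beta0 lam del Omega P Y hY.
have num : prob P (fun w => Zbar R (Y w) i1 i2 j1 j2 m == 1) =
    G i1 j1 * (1 - G i1 j2) * (1 - G i2 j1) * G i2 j2.
  transitivity (prob P (fun w => [forall p : 'I_N * 'I_N, (p.1 != p.2) ==>
     Sq i1 i2 j1 j2 (fun v => (m <= v)%N) (fun v => ~~ (m <= v)%N) (fun v => ~~ (m <= v)%N)
        (fun v => (m <= v)%N) p (Y w p.1 p.2)])).
    by rewrite /prob; apply: eq_bigl => w; rewrite Zbar1 Sq_event.
  by rewrite PE Sq_prod // !sum_ge // !sum_lt.
have numm : prob P (fun w => Zbar R (Y w) i1 i2 j1 j2 m == -1) =
    (1 - G i1 j1) * G i1 j2 * G i2 j1 * (1 - G i2 j2).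
  transitivity (prob P (fun w => [forall p : 'I_N * 'I_N, (p.1 != p.2) ==>
     Sq i1 i2 j1 j2 (fun v => ~~ (m <= v)%N) (fun v => (m <= v)%N) (fun v => (m <= v)%N)
        (fun v => ~~ (m <= v)%N) p (Y w p.1 p.2)])).
    by rewrite /prob; apply: eq_bigl => w; rewrite Zbarm1 Sq_event.
  by rewrite PE Sq_prod // !sum_ge // !sum_lt.
have den : prob P (fun w => (Zbar R (Y w) i1 i2 j1 j2 m == 1) || (Zbar R (Y w) i1 i2 j1 j2 m == -1))
   = prob P (fun w => Zbar R (Y w) i1 i2 j1 j2 m == 1) + prob P (fun w => Zbar R (Y w) i1 i2 j1 j2 m == -1).
  rewrite /prob (bigID (fun w => Zbar R (Y w) i1 i2 j1 j2 m == 1)) /=.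
  congr (_ + _); apply: eq_bigl => w.
    by apply: andb_idl => ->.
  case: eqP => [->|_] /=; last by rewrite andbT.
  by apply/esym/negbTE/eqP; lra.
rewrite /cprob den.
have -> : prob P (predI (fun w => Zbar R (Y w) i1 i2 j1 j2 m == 1)
   (fun w => (Zbar R (Y w) i1 i2 j1 j2 m == 1) || (Zbar R (Y w) i1 i2 j1 j2 m == -1)))
   = prob P (fun w => Zbar R (Y w) i1 i2 j1 j2 m == 1).
  by rewrite /prob; apply: eq_bigl => w /=; apply: andb_idr => ->.
rewrite num numm /G /GG Lambda_alg.
by congr Lambda; rewrite !dotvB; ring.
Qed.
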